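(* Let $T$ be an $\mathcal O$-operator on a Lie algebra $\mathfrak g$ with respect to a representation $(V;\rho)$, and let $T^1_t=T+t\mathfrak T_1$ and $T^2_t=T+t\mathfrak T_2$ be one-parameter infinitesimal deformations of $T$. If $T^1_t$ and $T^2_t$ are equivalent, then $\mathfrak T_1$ and $\mathfrak T_2$ lie in the same cohomology class of $\mathcal H^1(V,\mathfrak g)$.
   Context: An $\mathcal O$-operator: linear $T:V\to\mathfrak g$ with $[Tu,Tv]=T(\rho(Tu)(v)-\rho(Tv)(u))$. A one-parameter infinitesimal deformation of $T$ is $T+t\mathfrak T$ with $\mathfrak T:V\to\mathfrak g$ linear such that $T+t\mathfrak T$ is an $\mathcal O$-operator for all scalars $t$ (then $\mathfrak T$ is a $1$-cocycle below). A homomorphism from an $\mathcal O$-operator $T'$ to $T$ is a pair of a Lie algebra homomorphism $\phi_{\mathfrak g}:\mathfrak g\to\mathfrak g$ and a linear $\phi_V:V\to V$ with $T\circ\phi_V=\phi_{\mathfrak g}\circ T'$ and $\phi_V\rho(x)(u)=\rho(\phi_{\mathfrak g}(x))(\phi_V(u))$. The deformations $T^1_t,T^2_t$ are equivalent if there is $x\in\mathfrak g$ such that $(\mathrm{Id}_{\mathfrak g}+t\,\mathrm{ad}_x,\mathrm{Id}_V+t\rho(x))$ is a homomorphism from $T^2_t$ to $T^1_t$. Cohomology: $[u,v]_T=\rho(Tu)(v)-\rho(Tv)(u)$ is a Lie bracket on $V$, $\bar\rho(u)(x)=[Tu,x]+T\rho(x)(u)$ is a representation of $(V,[\cdot,\cdot]_T)$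 on $\mathfrak g$, and $\mathcal H^k(V,\mathfrak g)$ is the Chevalley–Eilenberg cohomology of $(V,[\cdot,\cdot]_T)$ with coefficients in $(\mathfrak g,\bar\rho)$, with coboundary $d_{\bar\rho}f(u_1,\dots,u_{k+1})=\sum_{i}(-1)^{i+1}[Tu_i,f(\dots,\hat u_i,\dots)]+\sum_i(-1)^{i+1}T\rho(f(\dots,\hat u_i,\dots))(u_i)+\sum_{i<j}(-1)^{i+j}f([u_i,u_j]_T,u_1,\dots,\hat u_i,\dots,\hat u_j,\dots,u_{k+1})$ on $\mathrm{Hom}(\wedge^kV,\mathfrak g)$. *)

(* Defs.v *)
From HB Require Import structures.
From mathcomp Require Import all_boot all_order all_algebra.
Set Implicit Arguments. Unset Strict Implicit. Unset Printing Implicit Defensive.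
Import GRing.Theory.
Local Open Scope ring_scope.

Definition lin (K : fieldType) (U W : lmodType K) (f : U -> W) : Prop :=
  forall (a : K) (u v : U), f (a *: u + v) = a *: f u + f v.

Definition is_lie_bracket (K : fieldType) (g : lmodType K) (br : g -> g -> g) : Prop :=
  [/\ forall x, lin (br x),
      forall y, lin (fun x => br x y),
      forall x, br x x = 0
    & forall x y z, br x (br y z) + br y (br z x) + br z (br x y) = 0].

Definition is_rep (K : fieldType) (g V : lmodType K) (br : g -> g -> g)
    (rho : g -> V -> V) : Prop :=
  [/\ forall x, lin (rho x),
      forall u, lin (fun x => rho x u)
    & forall x y u, rho (br x y) u = rho x (rho y u) - rho y (rho x u)].

Definition is_Ooperator (K : fieldType) (g V : lmodType K) (br : g -> g -> g)
    (rho : g -> V -> V) (T : V -> g) : Prop :=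
  lin T /\ forall u v, br (T u) (T v) = T (rho (T u) v - rho (T v) u).

Definition is_lie_hom (K : fieldType) (g : lmodType K) (br : g -> g -> g)
    (phi : g -> g) : Prop :=
  lin phi /\ forall x y, phi (br x y) = br (phi x) (phi y).

Definition is_Oop_hom (K : fieldType) (g V : lmodType K) (br : g -> g -> g)
    (rho : g -> V -> V) (T' T : V -> g) (phig : g -> g) (phiV : V -> V) : Prop :=
  [/\ is_lie_hom br phig, lin phiV,
      forall u, T (phiV u) = phig (T' u)
    & forall x u, phiV (rho x u) = rho (phig x) (phiV u)].

Definition is_inf_deformation (K : fieldType) (g V : lmodType K) (br : g -> g -> g)
    (rho : g -> V -> V) (T T1 : V -> g) : Prop :=
  lin T1 /\ forall t : K, is_Ooperator br rho (fun u => T u + t *: T1 u).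

Definition equiv_deformations (K : fieldType) (g V : lmodType K) (br : g -> g -> g)
    (rho : g -> V -> V) (T T1 T2 : V -> g) : Prop :=
  exists x : g, forall t : K,
    is_Oop_hom br rho (fun u => T u + t *: T2 u) (fun u => T u + t *: T1 u)
      (fun y => y + t *: br x y) (fun u => u + t *: rho x u).

Definition bracketT (K : fieldType) (g V : lmodType K) (rho : g -> V -> V)
    (T : V -> g) (u v : V) : V := rho (T u) v - rho (T v) u.

(* Chevalley-Eilenberg coboundary d_{rhobar} on 0-cochains (elements of g) *)
Definition d0 (K : fieldType) (g V : lmodType K) (br : g -> g -> g)
    (rho : g -> V -> V) (T : V -> g) (x : g) : V -> g :=
  fun u => br (T u) x + T (rho x u).

(* Chevalley-Eilenberg coboundary d_{rhobar} on 1-cochains f : V -> g *)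
Definition d1 (K : fieldType) (g V : lmodType K) (br : g -> g -> g)
    (rho : g -> V -> V) (T : V -> g) (f : V -> g) : V -> V -> g :=
  fun u1 u2 => br (T u1) (f u2) - br (T u2) (f u1)
               + T (rho (f u2) u1) - T (rho (f u1) u2)
               - f (bracketT rho T u1 u2).

Definition is_1cocycle (K : fieldType) (g V : lmodType K) (br : g -> g -> g)
    (rho : g -> V -> V) (T : V -> g) (f : V -> g) : Prop :=
  lin f /\ forall u1 u2, d1 br rho T f u1 u2 = 0.

Definition same_H1_class (K : fieldType) (g V : lmodType K) (br : g -> g -> g)
    (rho : g -> V -> V) (T : V -> g) (f1 f2 : V -> g) : Prop :=
  [/\ is_1cocycle br rho T f1, is_1cocycle br rho T f2
    & exists x : g, forall u, f1 u - f2 u = d0 br rho T x u].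

(* Main.v *)
Require Import Defs.
From mathcomp Require Import all_boot all_order all_algebra.
Set Implicit Arguments. Unset Strict Implicit.
Import GRing.Theory.
Local Open Scope ring_scope.

Section H.
Variable K : fieldType.

Lemma lin0 (U W : lmodType K) (f : U -> W) : lin f -> f 0 = 0.
Proof. move=> h; have := h 1 0 0; rewrite !scale1r addr0 => e.
by apply: (addrI (f 0)); rewrite addr0 -e. Qed.
Lemma linD (U W : lmodType K) (f : U -> W) : lin f -> forall u v, f (u + v) = f u + f v.
Proof. by move=> h u v; have := h 1 u v; rewrite !scale1r. Qed.
Lemma linZ (U W : lmodType K) (f : U -> W) : lin f -> forall a u, f (a *: u) = a *: f u.
Proof. by move=> h a u; rewrite -[a *: u]addr0 h lin0 // addr0. Qed.
Lemma linN (U W : lmodType K) (f : U -> W) : lin f -> forall u, f (- u) = - f u.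
Proof. by move=> h u; rewrite -scaleN1r linZ // scaleN1r. Qed.
Lemma linB (U W : lmodType K) (f : U -> W) : lin f -> forall u v, f (u - v) = f u - f v.
Proof. by move=> h u v; rewrite linD // linN. Qed.

Lemma brN (g : lmodType K) (br : g -> g -> g) : is_lie_bracket br ->
  forall x y, br x y = - br y x.
Proof.
case=> h1 h2 h3 _ x y; have := h3 (x + y).
rewrite linD // (linD (h2 _)) (linD (h2 _)) !h3 add0r addr0 => /eqP.
by rewrite addr_eq0 => /eqP ->; rewrite opprK.
Qed.

Lemma coef2 (W : lmodType K) (X P Q X' P' Q' : W) : (2%:R : K) != 0 ->
  (forall t : K, X + t*:P + (t*t)*:Q = X' + t*:P' + (t*t)*:Q') -> P = P'.
Proof.
move=> h2 H; have := H 0; rewrite mul0r !scale0r !addr0 => eX.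
have := H 1; have := H (-1); rewrite mulN1r opprK mulr1 !scale1r eX.
rewrite !scaleN1r -!addrA => /addrI e1 /addrI e2.
apply: (scalerI h2); rewrite !scaler_nat !mulr2n.
have: (P + Q) - (- P + Q) = (P' + Q') - (- P' + Q') by rewrite e1 e2.
rewrite !opprD !opprK => e; by rewrite -[P+P]addr0 -(subrr Q) -addrACA e addrACA subrr addr0.
Qed.

Lemma ac (W : lmodType K) (t : K) (A B C D : W) :
  A + t*:B + t*:(C + t*:D) = A + t*:(B + C) + (t*t)*:D.
Proof. by rewrite scalerDr scalerA !addrA scalerDr addrA. Qed.

Lemma acB (W : lmodType K) (t : K) (A B C D : W) :
  (A + t*:B) - (C + t*:D) = (A - C) + t*:(B - D).
Proof. by rewrite scalerBr opprD addrACA. Qed.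

Lemma expT (U W : lmodType K) (T T1 : U -> W) (t : K) (a b : U) :
  lin T -> lin T1 ->
  T (a + t*:b) + t*: T1 (a + t*:b) = T a + t*:(T b + T1 a) + (t*t)*:T1 b.
Proof. by move=> l l1; rewrite (linD l) (linZ l) (linD l1) (linZ l1) ac. Qed.

Lemma expBr (g : lmodType K) (br : g -> g -> g) (t : K) (a b c d : g) :
  is_lie_bracket br ->
  br (a + t*:b) (c + t*:d) = br a c + t*:(br b c + br a d) + (t*t)*:br b d.
Proof.
case=> h1 h2 _ _.
have Dl : forall x y z, br (x + y) z = br x z + br y z by move=> x y z; exact: (linD (h2 z)).
have Zl : forall s x z, br (s *: x) z = s *: br x z by move=> s x z; exact: (linZ (h2 z)).
by rewrite (linD (h1 _)) (linZ (h1 _)) !Dl !Zl ac.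
Qed.

Lemma cocycle (g V : lmodType K) (br : g -> g -> g) (rho : g -> V -> V) (T T1 : V -> g) :
  (2%:R : K) != 0 -> is_lie_bracket br -> is_rep br rho -> lin T ->
  is_inf_deformation br rho T T1 -> is_1cocycle br rho T T1.
Proof.
move=> h2 hb [r1 r2 _] lT [lT1 H]; split => // u v.
have rD : forall x y w, rho (x + y) w = rho x w + rho y w by move=> x y w; exact: (linD (r2 w)).
have rZ : forall s x w, rho (s *: x) w = s *: rho x w by move=> s x w; exact: (linZ (r2 w)).
have E : br (T1 u) (T v) + br (T u) (T1 v) = T (rho (T1 u) v - rho (T1 v) u) + T1 (rho (T u) v - rho (T v) u).
  apply: (coef2 (X := br (T u) (T v)) (Q := br (T1 u) (T1 v)) (X' := T (rho (T u) v - rho (T v) u)) (Q' := T1 (rho (T1 u) v - rho (T1 v) u)) h2) => t.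
  have [_ Ht] := H t; have := Ht u v; rewrite /= expBr // !rD !rZ acB expT //.
rewrite /d1 /bracketT (brN hb (T v)) opprK [br (T u) (T1 v) + _]addrC E (linB lT).
by rewrite [T _ - _ + _]addrAC subrK addrAC addrK subrr.
Qed.
End H.

Theorem theorem4p7 (K : fieldType) (g V : lmodType K)
    (br : g -> g -> g) (rho : g -> V -> V) (T T1 T2 : V -> g) :
  [pchar K] =i pred0 ->
  is_lie_bracket br ->
  is_rep br rho ->
  is_Ooperator br rho T ->
  is_inf_deformation br rho T T1 ->
  is_inf_deformation br rho T T2 ->
  equiv_deformations br rho T T1 T2 ->
  same_H1_class br rho T T1 T2.
Proof.
move=> hc hb hr [lT _] d1 d2 [x Hx].
have h2 : (2%:R : K) != 0 by rewrite (pcharf0P _).1.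
split; try exact: cocycle.
exists (- x) => u.
have [r1 r2 _] := hr.
have [lT1 _] := d1. have [hb1 _ _ _] := hb.
have E : T (rho x u) + T1 u = T2 u + br x (T u).
  apply: (coef2 (X := T u) (Q := T1 (rho x u)) (X' := T u) (Q' := br x (T2 u)) h2) => t.
  have [_ _ Ht _] := Hx t; have := Ht u; rewrite /= expT // (linD (hb1 _)) (linZ (hb1 _)) ac.
  by [].
have e' : T1 u = T2 u + br x (T u) - T (rho x u) by rewrite -E addrAC subrr add0r.
rewrite /d0 (linN (hb1 _)) (brN hb (T u) x) opprK (linN (r2 u)) (linN lT) e'.
by rewrite addrAC [T2 u + _ - T2 u]addrAC subrr add0r.
Qed.
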